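(* Let $n \geq 2$, let $k \geq 2$ be an integer and let $(M_1, \dots, M_k) \in \mathrm{GL}_n(\mathbb{R})^k$. The following are equivalent. \begin{enumerate} \item There do not exist nonzero vectors $\mathbf v_1, \dots, \mathbf v_k \in \mathbb{R}^n \setminus\{\mathbf 0\}$, each with rationally dependent components, such that $M_1 \mathbf v_1 = M_2 \mathbf v_2 = \dots = M_k \mathbf v_k$. \item For all $\mathbf g_1, \dots, \mathbf g_k \in \mathbb{R}^n$ and all $(M_1', \dots, M_k') \in \mathrm{GL}_n(\mathbb{R})^k$ such that $\pi_k(M_1', \dots, M_k') = \pi_k(M_1, \dots, M_k)$, the set \[ \bigcup_{i=1}^k \left(M_i' \cdot \mathbb{Z}^n + \mathbf g_i\right) \] is a dense forest. \end{enumerate}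
   Context: A vector $\mathbf v \in \mathbb{R}^n$ has rationally dependent components if there is $\mathbf q \in \mathbb{Z}^n \setminus \{\mathbf 0\}$ with $\mathbf q \cdot \mathbf v = 0$; otherwise it has rationally independent components. A set $F \subset \mathbb{R}^n$ is a dense forest if for every $\varepsilon > 0$ there exists $V(\varepsilon) > 0$ such that every line segment in $\mathbb{R}^n$ of length $V(\varepsilon)$ intersects $\bigcup_{\mathbf f \in F} B_2(\mathbf f, \varepsilon)$, where $B_2(\mathbf f, \varepsilon)$ is the open Euclidean ball of radius $\varepsilon$ centred at $\mathbf f$. Let $\mathcal{S}_n^k := \left(\mathbb{R}^* \backslash \mathrm{GL}_n(\mathbb{R}) / \mathrm{GL}_n(\mathbb{Q})\right)^k$, where $\mathbb{R}^*$ (nonzero reals) acts by left multiplication as homothetic matrices and $\mathrm{GL}_n(\mathbb{Q})$ acts by right multiplication, and let $\pi_k : \mathrm{GL}_n(\mathbb{R})^k \to \mathcal{S}_n^k$ be the canonical projection. Thus $\pi_k(M_1', \dots, M_k') = \pi_k(M_1, \dots, M_k)$ iff for each $i$ there are $c_i \in \mathbb{R}^*$ and $Q_i \in \mathrm{GL}_n(\mathbb{Q})$ with $M_i' = c_i M_i Q_i$. *)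

(* Defs.v *)
From HB Require Import structures.
From mathcomp Require Import all_boot all_order all_algebra.
From mathcomp Require Import reals.
Set Implicit Arguments. Unset Strict Implicit. Unset Printing Implicit Defensive.
Import Order.TTheory GRing.Theory Num.Theory.
Local Open Scope ring_scope.

Definition norm2 {R : realType} {n : nat} (v : 'cV[R]_n) : R :=
  Num.sqrt (\sum_(i < n) v i 0 ^+ 2).

Definition rat_dependent {R : realType} {n : nat} (v : 'cV[R]_n) : Prop :=
  exists q : 'cV[int]_n, q != 0 /\ \sum_(i < n) (q i 0)%:~R * v i 0 = 0.

Definition dense_forest {R : realType} {n : nat} (F : 'cV[R]_n -> Prop) : Prop :=
  forall eps : R, 0 < eps -> exists V : R, 0 < V /\
    forall a b : 'cV[R]_n, norm2 (b - a) = V ->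
      exists t : R, 0 <= t <= 1 /\
        exists f, F f /\ norm2 (a + t *: (b - a) - f) < eps.

Definition shifted_lattice {R : realType} {n : nat} (M : 'M[R]_n) (g : 'cV[R]_n)
  : 'cV[R]_n -> Prop :=
  fun x => exists z : 'cV[int]_n, x = M *m map_mx (fun m : int => m%:~R) z + g.

(* pi_k(M') = pi_k(M) in (R^* \ GL_n(R) / GL_n(Q))^k *)
Definition same_class {R : realType} {n k : nat} (M M' : 'I_k -> 'M[R]_n) : Prop :=
  forall i : 'I_k, exists c : R, c != 0 /\
    exists Q : 'M[rat]_n, Q \in unitmx /\
      M' i = c *: (M i *m map_mx (fun q : rat => ratr q) Q).

(* Main.v *)
Require Import Defs.
From HB Require Import structures.
From mathcomp Require Import all_boot all_order all_algebra.
From mathcomp Require Import reals.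
From mathcomp Require Import boolp classical_sets topology normedtype.
From mathcomp Require Import ring lra finmap.
Import Order.TTheory GRing.Theory Num.Theory.
Import numFieldTopology.Exports numFieldNormedType.Exports.
Set Implicit Arguments. Unset Strict Implicit. Unset Printing Implicit Defensive.
Local Open Scope ring_scope.

Definition N1 {R : realType} {n : nat} (x : 'cV[R]_n) : R := \sum_i `|x i 0|.
Definition dot {R : realType} {n : nat} (a x : 'cV[R]_n) : R :=
  \sum_i a i 0 * x i 0.
Definition isint {R : realType} (x : R) : Prop := exists z : int, x = z%:~R.

Lemma N1_ge0 (R : realType) n (x : 'cV[R]_n) : 0 <= N1 x.
Proof. by apply: sumr_ge0 => i _. Qed.

Lemma N1D (R : realType) n (x y : 'cV[R]_n) : N1 (x + y) <= N1 x + N1 y.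
Proof.
rewrite /N1 -big_split /=; apply: ler_sum => i _; rewrite mxE; exact: ler_normD.
Qed.

Lemma N1Z (R : realType) n (c : R) (x : 'cV[R]_n) : N1 (c *: x) = `|c| * N1 x.
Proof.
rewrite /N1 mulr_sumr; apply: eq_bigr => i _; by rewrite mxE normrM.
Qed.

Lemma N1N (R : realType) n (x : 'cV[R]_n) : N1 (- x) = N1 x.
Proof. by rewrite -scaleN1r N1Z normrN normr1 mul1r. Qed.

Lemma N1B (R : realType) n (x y : 'cV[R]_n) : N1 (x - y) = N1 (y - x).
Proof. by rewrite -N1N opprB. Qed.

Lemma N1_0 (R : realType) n : N1 (0 : 'cV[R]_n) = 0.
Proof. by rewrite /N1 big1 // => i _; rewrite mxE normr0. Qed.

Lemma N1_entry (R : realType) n (x : 'cV[R]_n) i : `|x i 0| <= N1 x.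
Proof.
rewrite /N1 (bigD1 i) //= lerDl; exact: sumr_ge0.
Qed.

Lemma nz_entry (R : zmodType) n (x : 'cV[R]_n) : x != 0 -> exists j, x j 0 != 0.
Proof.
move=> xn0; apply: contrapT => H; move/eqP: xn0; apply.
apply/matrixP => i j; rewrite (ord1 j) mxE; apply/eqP; apply: contrapT => hi.
by apply: H; exists i; apply/negP.
Qed.

Lemma N1_gt0 (R : realType) n (x : 'cV[R]_n) : x != 0 -> 0 < N1 x.
Proof.
move=> /nz_entry [j hj]; apply: lt_le_trans (N1_entry x j); by rewrite normr_gt0.
Qed.

Lemma N1_eq0 (R : realType) n (x : 'cV[R]_n) : N1 x < 0 + 0 -> False.
Proof. by rewrite addr0 ltNge N1_ge0. Qed.

Lemma dotD (R : realType) n (a x y : 'cV[R]_n) : dot a (x + y) = dot a x + dot a y.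
Proof. rewrite /dot -big_split; apply: eq_bigr => i _; by rewrite mxE mulrDr. Qed.
Lemma dotZ (R : realType) n (a x : 'cV[R]_n) c : dot a (c *: x) = c * dot a x.
Proof. rewrite /dot mulr_sumr; apply: eq_bigr => i _; by rewrite mxE mulrCA. Qed.
Lemma dotN (R : realType) n (a x : 'cV[R]_n) : dot a (- x) = - dot a x.
Proof. by rewrite -scaleN1r dotZ mulN1r. Qed.
Lemma dotB (R : realType) n (a x y : 'cV[R]_n) : dot a (x - y) = dot a x - dot a y.
Proof. by rewrite dotD dotN. Qed.
Lemma dot0 (R : realType) n (a : 'cV[R]_n) : dot a 0 = 0.
Proof. by rewrite /dot big1 // => i _; rewrite mxE mulr0. Qed.
Lemma dotDl (R : realType) n (a b x : 'cV[R]_n) : dot (a + b) x = dot a x + dot b x.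
Proof. rewrite /dot -big_split; apply: eq_bigr => i _; by rewrite mxE mulrDl. Qed.
Lemma dotZl (R : realType) n (a x : 'cV[R]_n) c : dot (c *: a) x = c * dot a x.
Proof. rewrite /dot mulr_sumr; apply: eq_bigr => i _; by rewrite mxE mulrA. Qed.
Lemma dotBl (R : realType) n (a b x : 'cV[R]_n) : dot (a - b) x = dot a x - dot b x.
Proof. by rewrite dotDl -scaleN1r dotZl mulN1r. Qed.
Lemma dot_delta (R : realType) n (j : 'I_n) (x : 'cV[R]_n) :
  dot (delta_mx j 0) x = x j 0.
Proof.
rewrite /dot (bigD1 j) //= big1 ?addr0 => [|i /negPf nij].
  by rewrite mxE !eqxx mul1r.
by rewrite mxE nij mul0r.
Qed.

Lemma isint0 (R : realType) : isint (0 : R).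
Proof. by exists 0. Qed.
Lemma isintB (R : realType) (x y : R) : isint x -> isint y -> isint (x - y).
Proof. by move=> [a ->] [b ->]; exists (a - b); rewrite intrB. Qed.

Definition subgrp {R : realType} {n : nat} (G : 'cV[R]_n -> Prop) :=
  G 0 /\ forall x y, G x -> G y -> G (x - y).

Lemma subgrpN (R : realType) n (G : 'cV[R]_n -> Prop) x : subgrp G -> G x -> G (- x).
Proof. by move=> [G0 GB] Gx; rewrite -sub0r; apply: GB. Qed.
Lemma subgrpD (R : realType) n (G : 'cV[R]_n -> Prop) x y :
  subgrp G -> G x -> G y -> G (x + y).
Proof. move=> sG Gx Gy; rewrite -(opprK y); apply: sG.2 => //; exact: subgrpN. Qed.
Lemma subgrpZ (R : realType) n (G : 'cV[R]_n -> Prop) x (m : int) :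
  subgrp G -> G x -> G ((m%:~R : R) *: x).
Proof.
move=> sG Gx.
have Hn : forall k : nat, G ((k%:R : R) *: x).
  elim=> [|k IH]; first by rewrite scale0r; exact: sG.1.
  by rewrite -natr1 scalerDl scale1r; apply: subgrpD.
case: m => k; first exact: Hn.
rewrite NegzE intrN scaleNr; apply: subgrpN => //; exact: Hn.
Qed.

Definition supp {R : realType} {n : nat} (S : {set 'I_n}) (x : 'cV[R]_n) :=
  forall i, i \notin S -> x i 0 = 0.

Definition nondense {R : realType} {n : nat} (S : {set 'I_n}) (G : 'cV[R]_n -> Prop) :=
  exists y, supp S y /\ exists d : R, 0 < d /\ forall g, G g -> d <= N1 (y - g).

Definition proj {R : realType} {n : nat} (u : 'cV[R]_n) (j : 'I_n) (x : 'cV[R]_n) :=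
  x - (x j 0 / u j 0) *: u.

Lemma subr_sub_gen (V : zmodType) (x y a b : V) : x - y - (a - b) = (x - a) - (y - b).
Proof. rewrite !opprB !addrA [x - y + b]addrAC [x - a + b]addrAC; exact: addrAC. Qed.

Lemma projB (R : realType) n (u : 'cV[R]_n) j x y : proj u j (x - y) = proj u j x - proj u j y.
Proof.
rewrite /proj !mxE mulrBl scalerBl.
exact: subr_sub_gen.
Qed.

Lemma projZ (R : realType) n (u : 'cV[R]_n) j x c : proj u j (c *: x) = c *: proj u j x.
Proof. by rewrite /proj !mxE scalerBr scalerA mulrA. Qed.

Lemma proj_self (R : realType) n (u : 'cV[R]_n) j : u j 0 != 0 -> proj u j u = 0.
Proof. by move=> h; rewrite /proj divff // scale1r subrr. Qed.

Lemma proj_supp (R : realType) n S (u : 'cV[R]_n) j x : u j 0 != 0 ->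
  supp S u -> supp S x -> supp (S :\ j) (proj u j x).
Proof.
move=> hu su sx i; rewrite in_setD1 negb_and negbK => /orP [/eqP -> |iS].
  by rewrite /proj !mxE divfK // subrr.
by rewrite /proj !mxE (su i iS) (sx i iS) mulr0 subrr.
Qed.

Lemma proj_decomp (R : realType) n (u : 'cV[R]_n) j x :
  x = proj u j x + (x j 0 / u j 0) *: u.
Proof. by rewrite /proj subrK. Qed.

Lemma dot_proj (R : realType) n (a u : 'cV[R]_n) j x :
  dot a (proj u j x) = dot (a - (dot a u / u j 0) *: delta_mx j 0) x.
Proof.
rewrite /proj dotB dotZ dotBl dotZl dot_delta; congr (_ - _).
by ring.
Qed.

Lemma lift_entry (R : realType) n (a u : 'cV[R]_n) j l c : l != j ->
  (a - c *: delta_mx j 0) l 0 = a l 0.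
Proof. by move=> /negPf h; rewrite !mxE h andFb mulr0 subr0. Qed.

Lemma round_ex (R : realType) (c : R) : exists m : int, `|c - m%:~R| <= 2^-1.
Proof.
exists (Num.floor (c + 2^-1)).
have /andP [h1 h2] := floor_itv (c + 2^-1).
move: h1 h2; rewrite intrD; set F := (Num.floor _)%:~R => h1 h2.
rewrite ler_norml; apply/andP; split; lra.
Qed.

Lemma proj0 (R : realType) n (u : 'cV[R]_n) j : proj u j 0 = 0.
Proof. by rewrite /proj mxE mul0r scale0r subr0. Qed.

Lemma N1_delta (R : realType) n (l : 'I_n) : N1 (delta_mx l 0 : 'cV[R]_n) = 1.
Proof.
rewrite /N1 (bigD1 l) //= big1 ?addr0 => [|i /negPf nil].
  by rewrite mxE !eqxx normr1.
by rewrite mxE nil normr0.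
Qed.

Lemma supp_empty (R : realType) n (S : {set 'I_n}) (x : 'cV[R]_n) :
  (forall i, i \notin S) -> supp S x -> x = 0.
Proof.
move=> hS sx; apply/matrixP => i j; rewrite (ord1 j) mxE; exact: sx.
Qed.

Lemma annih (R : realType) n (m : nat) : forall (S : {set 'I_n}) (G : 'cV[R]_n -> Prop),
  #|S| = m -> subgrp G -> (forall g, G g -> supp S g) -> nondense S G ->
  exists a : 'cV[R]_n, (exists2 l, l \in S & a l 0 != 0) /\
    (forall g, G g -> isint (dot a g)).
Proof.
elim: m => [|m IH] S G cS sG GS [y [sy [d [d0 yd]]]].
  have y0 : y = 0 by apply: (supp_empty (S := S)) => // i; rewrite (cards0_eq cS) inE.
  by have := yd 0 sG.1; rewrite y0 subrr N1_0 leNgt d0.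
have lift : forall (u : 'cV[R]_n) (j : 'I_n), u j 0 != 0 -> j \in S -> supp S u ->
     nondense (S :\ j) (fun x => exists g, G g /\ x = proj u j g) ->
     exists a : 'cV[R]_n, (exists2 l, l \in S & a l 0 != 0) /\
       (forall g, G g -> isint (dot a g)).
  move=> u j uj jS su nd.
  have cS' : #|S :\ j| = m.
    by have := cardsD1 j S; rewrite jS cS add1n => -[].
  have sG' : subgrp (fun x => exists g, G g /\ x = proj u j g).
    split; first by exists 0; split; [exact: sG.1 | rewrite proj0].
    move=> _ _ [g1 [G1 ->]] [g2 [G2 ->]]; exists (g1 - g2); split.
      exact: sG.2.
    by rewrite projB.
  have GS' : forall x, (exists g, G g /\ x = proj u j g) -> supp (S :\ j) x.
    by move=> _ [g [Gg ->]]; apply: proj_supp => //; apply: GS.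
  have [a [[l lS al] ha]] := IH _ _ cS' sG' GS' nd.
  exists (a - (dot a u / u j 0) *: delta_mx j 0); split.
    move: lS; rewrite in_setD1 => /andP [lj lS].
    by exists l => //; rewrite lift_entry.
  move=> g Gg; rewrite -dot_proj; apply: ha; by exists g.
have [[u [Gu [un0 Nu]]]|nosmall] :=
   pselect (exists u, G u /\ u != 0 /\ N1 u < d).
  have [j uj] := nz_entry un0.
  have jS : j \in S.
    by apply: contraT => jS; move: uj; rewrite (GS u Gu j jS) eqxx.
  apply: (lift u j uj jS (GS u Gu)).
  exists (proj u j y); split; first by apply: proj_supp => //; apply: GS.
  exists (d - N1 u / 2); split.
    by have := N1_ge0 u; lra.
  move=> _ [g [Gg ->]]; rewrite leNgt; apply/negP => H.
  set c := (y - g) j 0 / u j 0.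
  have [m0 hm0] := round_ex c.
  have Gg2 : G (g + m0%:~R *: u) by apply: subgrpD => //; apply: subgrpZ.
  have := yd _ Gg2.
  have -> : y - (g + m0%:~R *: u) = proj u j (y - g) + (c - m0%:~R) *: u.
    have e := proj_decomp u j (y - g); rewrite -/c in e.
    by rewrite opprD addrA [X in X - _ = _]e scalerBl addrA.
  rewrite -projB in H; move=> H2.
  have H3 := N1D (proj u j (y - g)) ((c - m0%:~R) *: u).
  rewrite N1Z in H3.
  have H4 : `|c - m0%:~R| * N1 u <= N1 u / 2.
    by rewrite [X in _ <= X]mulrC; apply: ler_wpM2r; [exact: N1_ge0 | exact: hm0].
  move: H H2 H3 H4; set P := N1 (proj _ _ _); set Q := N1 (_ + _); lra.
have nosm : forall u, G u -> u != 0 -> d <= N1 u.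
  move=> u Gu un0; rewrite leNgt; apply/negP => H; apply: nosmall; by exists u.
have [[g0 [Gg0 g0n0]]|allz] := pselect (exists g0, G g0 /\ g0 != 0); last first.
  have yn0 : y != 0.
    apply/negP => /eqP y0; have := yd 0 sG.1; by rewrite y0 subrr N1_0 leNgt d0.
  have [l yl] := nz_entry yn0.
  have lS : l \in S by apply: contraT => lS; move: yl; rewrite (sy l lS) eqxx.
  exists (delta_mx l 0); split.
    by exists l => //; rewrite mxE !eqxx oner_neq0.
  move=> g Gg; have -> : g = 0.
    apply: contrapT => /eqP gn0; apply: allz; by exists g.
  rewrite dot0; exact: isint0.
pose E := fun r : R => exists g, G g /\ g != 0 /\ r = N1 g.
have E0 : (E !=set0)%classic by exists (N1 g0); exists g0.
have Elb : lbound E d by move=> r [g [Gg [gn0 ->]]]; exact: nosm.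
have hinf : has_inf E by split => //; exists d.
set s := inf E.
have ds : d <= s by exact: lb_le_inf.
have sle : forall g, G g -> g != 0 -> s <= N1 g.
  move=> g Gg gn0; apply: (ge_inf (proj2 hinf)); by exists g.
have s0 : 0 < s by exact: lt_le_trans d0 ds.
have [e [d1 [Gd1 [d1n0 ->]]] hd1] := inf_adherent s0 hinf.
have [j dj] := nz_entry d1n0.
have jS : j \in S.
  by apply: contraT => jS; move: dj; rewrite (GS d1 Gd1 j jS) eqxx.
set r := s - N1 d1 / 2.
have r0 : 0 < r by rewrite /r; lra.
have decomp : forall h (m0 : int), h - m0%:~R *: d1 =
    proj d1 j h + (h j 0 / d1 j 0 - m0%:~R) *: d1.
  move=> h m0; rewrite {1}(proj_decomp d1 j h) scalerBl addrA; done.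
have K : forall h, G h -> proj d1 j h != 0 -> r <= N1 (proj d1 j h).
  move=> h Gh ph.
  have [m0 hm0] := round_ex (h j 0 / d1 j 0).
  have Ghm : G (h - m0%:~R *: d1) by apply: sG.2 => //; apply: subgrpZ.
  have hmn0 : h - m0%:~R *: d1 != 0.
    apply/negP => /eqP hm; move: ph; apply/negP/negPn/eqP.
    have -> : h = m0%:~R *: d1 by apply/eqP; rewrite -subr_eq0 hm.
    by rewrite projZ proj_self // scaler0.
  have := sle _ Ghm hmn0; rewrite decomp => H1.
  have H3 := N1D (proj d1 j h) ((h j 0 / d1 j 0 - m0%:~R) *: d1).
  rewrite N1Z in H3.
  have H4 : `|h j 0 / d1 j 0 - m0%:~R| * N1 d1 <= N1 d1 / 2.
    by rewrite [X in _ <= X]mulrC; apply: ler_wpM2r; [exact: N1_ge0 | exact: hm0].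
  rewrite /r; lra.
have K0 : forall h, G h -> proj d1 j h = 0 -> isint (h j 0 / d1 j 0).
  move=> h Gh ph.
  have [m0 hm0] := round_ex (h j 0 / d1 j 0).
  have Ghm : G (h - m0%:~R *: d1) by apply: sG.2 => //; apply: subgrpZ.
  have hm0' : h - m0%:~R *: d1 = 0.
    apply: contrapT => /eqP hmn0.
    have := sle _ Ghm hmn0; rewrite decomp ph add0r N1Z => H1.
    have H4 : `|h j 0 / d1 j 0 - m0%:~R| * N1 d1 <= N1 d1 / 2.
      by rewrite [X in _ <= X]mulrC; apply: ler_wpM2r; [exact: N1_ge0 | exact: hm0].
    move: (le_trans H1 H4) hd1; rewrite -/s; clear -s0; lra.
  move: hm0'; rewrite decomp ph add0r => /eqP; rewrite scaler_eq0 (negPf d1n0) orbF.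
  by rewrite subr_eq0 => /eqP ->; exists m0.
have [[l lSj]|noS] := pselect (exists l, l \in S :\ j).
  apply: (lift d1 j dj jS (GS d1 Gd1)).
  exists ((r / 2) *: delta_mx l 0); split.
    move=> i iS; rewrite !mxE.
    have -> : (i == l) = false by apply/negP => /eqP il; move: iS; rewrite il lSj.
    by rewrite andFb mulr0.
  exists (r / 4); split; first lra.
  move=> _ [g [Gg ->]].
  have Ny : N1 ((r / 2) *: delta_mx l 0 : 'cV[R]_n) = r / 2.
    by rewrite N1Z N1_delta mulr1 ger0_norm //; lra.
  have [pg0|pgn0] := eqVneq (proj d1 j g) 0.
    by rewrite pg0 subr0 Ny; lra.
  have := K g Gg pgn0.
  have := N1D (proj d1 j g - (r / 2) *: delta_mx l 0) ((r / 2) *: delta_mx l 0).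
  rewrite subrK Ny N1B; lra.
exists ((d1 j 0)^-1 *: delta_mx j 0); split.
  by exists j => //; rewrite !mxE !eqxx mulr1 invr_eq0.
move=> g Gg.
have pg : proj d1 j g = 0.
  apply: (supp_empty (S := S :\ j)); first by move=> i; apply/negP => h; apply: noS; exists i.
  by apply: proj_supp => //; apply: GS.
by rewrite dotZl dot_delta mulrC; apply: K0.
Qed.

Definition zR {R : realType} {n : nat} (z : 'cV[int]_n) : 'cV[R]_n :=
  map_mx (fun m : int => m%:~R) z.

Lemma zRB (R : realType) n (z1 z2 : 'cV[int]_n) : zR (z1 - z2) = zR z1 - zR z2 :> 'cV[R]_n.
Proof. by apply/matrixP => i j; rewrite !mxE intrB. Qed.
Lemma zRD (R : realType) n (z1 z2 : 'cV[int]_n) : zR (z1 + z2) = zR z1 + zR z2 :> 'cV[R]_n.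
Proof. by apply/matrixP => i j; rewrite !mxE intrD. Qed.
Lemma zR0 (R : realType) n : zR (0 : 'cV[int]_n) = 0 :> 'cV[R]_n.
Proof. by apply/matrixP => i j; rewrite !mxE. Qed.
Lemma zR_delta (R : realType) n (l : 'I_n) : zR (delta_mx l 0) = delta_mx l 0 :> 'cV[R]_n.
Proof. by apply/matrixP => i j; rewrite !mxE; case: (_ && _). Qed.

Lemma dotC (R : realType) n (a x : 'cV[R]_n) : dot a x = dot x a.
Proof. by apply: eq_bigr => i _; rewrite mulrC. Qed.

Lemma not_isint_half (R : realType) : ~ isint (2^-1 : R).
Proof.
move=> [z hz].
have [hz0|hz0] := lerP z 0.
  have : (z%:~R : R) <= 0%:~R by rewrite ler_int.
  rewrite -hz; lra.
have : (1%:~R : R) <= z%:~R by rewrite ler_int.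
rewrite -hz; lra.
Qed.

Lemma kron (R : realType) n (v : 'cV[R]_n) : ~ rat_dependent v ->
  forall y d, 0 < d -> exists t, exists z, N1 (y - (t *: v + zR z)) < d.
Proof.
move=> nrd y d d0; apply: contrapT => H.
pose G := fun x : 'cV[R]_n => exists t, exists z, x = t *: v + zR z.
have sG : subgrp G.
  split; first by exists 0, 0; rewrite scale0r zR0 addr0.
  move=> _ _ [t1 [z1 ->]] [t2 [z2 ->]]; exists (t1 - t2), (z1 - z2).
  by rewrite zRB scalerBl opprD addrACA.
have nd : nondense (finset.setTfor 'I_n) G.
  exists y; split; first by move=> i; rewrite finset.in_setT.
  exists d; split => // _ [t [z ->]]; rewrite leNgt; apply/negP => h.
  by apply: H; exists t, z.
have GS : forall g, G g -> supp (finset.setTfor 'I_n) g.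
  by move=> g _ i; rewrite finset.in_setT.
have [a [[l _ al] ha]] := annih (erefl _) sG GS nd.
have aint : forall i, exists z : int, a i 0 = z%:~R.
  move=> i; have := ha (delta_mx i 0).
  rewrite dotC dot_delta; apply; exists 0, (delta_mx i 0).
  by rewrite scale0r add0r zR_delta.
have dav : dot a v = 0.
  apply: contrapT => /eqP hv; apply: (@not_isint_half R).
  have := ha (((2 * dot a v)^-1) *: v).
  rewrite dotZ invfM -mulrA mulVf // mulr1; apply.
  by exists ((2 * dot a v)^-1), 0; rewrite zR0 addr0 invfM.
have [f hf] := choice aint.
apply: nrd; exists (\col_i f i); split.
  apply/negP => /eqP q0; move: al.
  have : (\col_i f i) l 0 = 0 by rewrite q0 mxE.
  by rewrite mxE hf => ->; rewrite eqxx.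
apply: etrans dav; apply: eq_bigr => i _; by rewrite mxE hf.
Qed.

Lemma ukron (R : realType) n (v : 'cV[R]_n) : ~ rat_dependent v ->
  forall d, 0 < d -> exists T, 0 <= T /\ forall y, exists t, `|t| <= T /\
    exists z, N1 (y - (t *: v + zR z)) < d.
Proof.
move=> nrd d d0.
pose N := (Num.truncn (n%:R * 2 / d)).+1.
have hN : n%:R * 2 / d < N%:R := truncnS_gt _.
have N0 : (0 : R) < N%:R by rewrite ltr0n.
pose p (f : {ffun 'I_n -> 'I_N}) : 'cV[R]_n := \col_i ((f i : nat)%:R / N%:R).
have H : forall f, exists t, exists z, N1 (p f - (t *: v + zR z)) < d / 2.
  by move=> f; apply: kron => //; lra.
have [tf htf] := choice H.
exists (\sum_f `|tf f|); split; first by apply: sumr_ge0.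
move=> y.
pose fl : 'cV[int]_n := \col_i Num.floor (y i 0).
pose w := y - zR fl.
have w01 : forall i, 0 <= w i 0 < 1.
  move=> i; rewrite /w !mxE.
  have /andP [h1 h2] := floor_itv (y i 0); move: h1 h2; rewrite intrD.
  set F := (Num.floor _)%:~R => h1 h2; apply/andP; split; lra.
pose k i := Num.truncn (w i 0 * N%:R).
have kN : forall i, (k i < N)%N.
  move=> i; have /andP [h1 h2] := w01 i.
  rewrite truncn_lt_nat; last by apply: mulr_ge0 => //; apply: ltW.
  by rewrite -[X in _ < X]mul1r ltr_pM2r.
pose f := [ffun i => Ordinal (kN i)].
have [z hz] := htf f.
exists (tf f); split.
  by rewrite (bigD1 f) //= lerDl; apply: sumr_ge0.
exists (z + fl).
have -> : y - (tf f *: v + zR (z + fl)) = (w - p f) + (p f - (tf f *: v + zR z)).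
  by apply/matrixP => i j; rewrite /w !mxE; ring.
have hw : N1 (w - p f) < d / 2.
  apply: (@le_lt_trans _ _ (\sum_(i < n) N%:R^-1)).
    apply: ler_sum => i _; rewrite !mxE ffunE /=.
    have /andP [h1 h2] := w01 i.
    have /andP [k1 k2] : (k i)%:R <= w i 0 * N%:R < (k i).+1%:R.
      by apply: truncn_itv; apply: mulr_ge0 => //; apply: ltW.
    move: k2; rewrite -natr1 => k2.
    have e1 : (k i)%:R / N%:R <= w i 0 by rewrite ler_pdivrMr.
    have e2 : w i 0 < ((k i)%:R + 1) / N%:R by rewrite ltr_pdivlMr.
    have e3 : (((k i)%:R + 1) / N%:R : R) = (k i)%:R / N%:R + N%:R^-1.
      by rewrite mulrDl mul1r.
    rewrite e3 in e2; move: e1 e2; rewrite /w !mxE => e1 e2.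
    rewrite ger0_norm; [lra | lra].
  move: hN; rewrite ltr_pdivrMr // => hN.
  rewrite sumr_const card_ord -[_ *+ n]mulr_natr mulrC ltr_pdivrMr //.
  have -> : d / 2 * N%:R = N%:R * d / 2 by ring.
  lra.
have := N1D (w - p f) (p f - (tf f *: v + zR z)).
move: hw hz; set A := N1 (w - _); set B := N1 (p f - _); set C := N1 (_ + _); lra.
Qed.

Definition CM {R : realType} {n : nat} (A : 'M[R]_n) : R :=
  \sum_r \sum_c `|A r c|.

Lemma CM_ge0 (R : realType) n (A : 'M[R]_n) : 0 <= CM A.
Proof. by apply: sumr_ge0 => r _; apply: sumr_ge0. Qed.

Lemma N1_mul (R : realType) n (A : 'M[R]_n) (x : 'cV[R]_n) :
  N1 (A *m x) <= CM A * N1 x.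
Proof.
rewrite /N1 /CM mulr_suml; apply: ler_sum => r _; rewrite mxE.
apply: le_trans (ler_norm_sum _ _ _) _; rewrite mulr_suml.
apply: ler_sum => c _; rewrite normrM; apply: ler_wpM2l => //.
exact: (N1_entry x c).
Qed.

Lemma norm2_le_N1 (R : realType) n (x : 'cV[R]_n) : norm2 x <= N1 x.
Proof.
rewrite /norm2 -(ger0_norm (N1_ge0 x)) -sqrtr_sqr; apply: ler_wsqrtr.
rewrite expr2 {1}/N1 mulr_suml; apply: ler_sum => i _.
apply: (le_trans (ler_norm _)); rewrite normrM; apply: ler_wpM2l => //; exact: N1_entry.
Qed.

Lemma mx_norm_entry (R : realType) m n (M : 'M[R]_(m, n)) i j : `|M i j| <= `|M|.
Proof.
rewrite [X in _ <= X]/Num.norm /= mx_normrE.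
exact: (le_bigmax _ (fun ij : 'I_m * 'I_n => `|M ij.1 ij.2|) (i, j)).
Qed.

Lemma N1_le_mx_norm (R : realType) n (x : 'cV[R]_n) : N1 x <= n%:R * `|x^T|.
Proof.
rewrite /N1; apply: le_trans (_ : \sum_(i < n) `|x^T| <= _).
  apply: ler_sum => i _; have := mx_norm_entry x^T 0 i; by rewrite mxE.
by rewrite sumr_const card_ord mulr_natl.
Qed.

Lemma sphere_compact (R : realType) n : compact [set r : 'rV[R]_n | `|r| = 1].
Proof.
apply: bounded_closed_compact.
  rewrite /= /bounded_near; near=> M => x /= ->; near: M.
  by apply: nbhs_pinfty_ge; rewrite num_real.
have -> : [set r : 'rV[R]_n | `|r| = 1]%classic = ((fun r : 'rV[R]_n => `|r|) @^-1` [set x | x = 1])%classic.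
  by [].
apply: preimage_closed; last exact: closed_eq.
move=> x _; exact: norm_continuous.
Unshelve. all: by end_near.
Qed.

Lemma final_ineq (R : realType) (CA CB T t X1 Y nn eps : R) :
  0 <= CA -> 0 <= CB -> 0 <= X1 -> 0 <= Y -> 0 <= nn -> 0 < eps ->
  X1 < eps / (2 * (CA + 1)) -> `|t| <= T ->
  Y <= nn * (eps / (2 * ((CA + 1) * (T + 1) * (CB + 1) * (nn + 1)))) ->
  CA * (X1 + `|t| * (CB * Y)) < eps.
Proof.
move=> hCA hCB hX hY hn he hX1 ht hY1.
have T0 : 0 <= T := le_trans (normr_ge0 t) ht.
set K := (CA + 1) * (T + 1) * (CB + 1) * (nn + 1).
have K0 : 0 < K by rewrite /K !mulr_gt0 //; lra.
have h1 : CA * X1 <= (CA + 1) * X1 by apply: ler_wpM2r => //; lra.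
have h2 : (CA + 1) * X1 < eps / 2.
  move: hX1; rewrite ltr_pdivlMr; last by lra.
  move=> h; rewrite ltr_pdivlMr //; rewrite mulrC; lra.
have h3 : CA * (`|t| * (CB * Y)) <= (CA + 1) * ((T + 1) * ((CB + 1) * Y)).
  apply: ler_pM; [done|by rewrite !mulr_ge0|lra|].
  apply: ler_pM; [done|by rewrite !mulr_ge0|lra|].
  apply: ler_wpM2r => //; lra.
have h4 : Y <= (nn + 1) * (eps / (2 * K)).
  apply: le_trans hY1 _; apply: ler_wpM2r; last lra.
  by apply: mulr_ge0; [lra | rewrite invr_ge0; apply: mulr_ge0 => //; apply: ltW].
have h5 : (CA + 1) * ((T + 1) * ((CB + 1) * Y)) <= eps / 2.
  have -> : eps / 2 = (CA + 1) * ((T + 1) * ((CB + 1) * ((nn + 1) * (eps / (2 * K))))).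
    rewrite /K; field; repeat split; lra.
  apply: ler_wpM2l; first lra.
  apply: ler_wpM2l; first lra.
  apply: ler_wpM2l; first lra.
  done.
rewrite mulrDr; lra.
Qed.

Lemma loc (R : realType) n k (A : 'I_k -> 'M[R]_n) (g : 'I_k -> 'cV[R]_n) :
  (forall i, A i \in unitmx) ->
  (forall w : 'cV[R]_n, w != 0 -> exists i, ~ rat_dependent (invmx (A i) *m w)) ->
  forall eps : R, 0 < eps -> forall w0 : 'rV[R]_n, w0 != 0 ->
  exists T rho, 0 <= T /\ 0 < rho /\ forall r : 'rV[R]_n, `|r - w0| < rho ->
    forall c : 'cV[R]_n, exists s, `|s| <= T /\
      exists i z, N1 (c + s *: r^T - (A i *m zR z + g i)) < eps.
Proof.
move=> hA hgood eps eps0 w0 wn.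
have c0n : w0^T != 0.
  by apply: contraNneq wn => h; rewrite -(trmxK w0) h trmx0.
have [i hi] := hgood _ c0n.
set B := invmx (A i).
set CA := CM (A i); set CB := CM B.
have CA0 : 0 <= CA := CM_ge0 _.
have CB0 : 0 <= CB := CM_ge0 _.
have d0 : 0 < eps / (2 * (CA + 1)) by apply: divr_gt0 => //; lra.
have [T [T0 hT]] := ukron hi d0.
set nn : R := n%:R.
have nn0 : 0 <= nn by rewrite /nn ler0n.
set K := (CA + 1) * (T + 1) * (CB + 1) * (nn + 1).
have K0 : 0 < K by rewrite /K !mulr_gt0 //; lra.
exists T, (eps / (2 * K)); split => //; split; first by apply: divr_gt0 => //; lra.
move=> r hr c.
have [t [ht [z hz]]] := hT (B *m (c - g i)).
exists (-t); split; first by rewrite normrN.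
exists i, z.
have key : c + (-t) *: r^T - (A i *m zR z + g i) =
    A i *m ((B *m (c - g i) - (t *: (B *m w0^T) + zR z)) + t *: (B *m (w0^T - r^T))).
  have inner : (B *m (c - g i) - (t *: (B *m w0^T) + zR z)) + t *: (B *m (w0^T - r^T))
      = B *m (c - g i - t *: r^T) - zR z.
    rewrite !(mulmxBr B) -!(scalemxAr t B).
    by apply/matrixP => a b; rewrite !mxE; ring.
  rewrite inner mulmxBr mulmxA mulmxV // mul1mx.
  by apply/matrixP => a b; rewrite !mxE; ring.
rewrite key.
apply: le_lt_trans (N1_mul _ _) _.
set X := B *m (c - g i) - _.
have e1 := N1D X (t *: (B *m (w0^T - r^T))).
rewrite N1Z in e1.
have e2 := N1_mul B (w0^T - r^T).
have e3 := N1_le_mx_norm (w0^T - r^T).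
have e4 : `|(w0^T - r^T)^T| = `|r - w0|.
  by rewrite linearB /= !trmxK distrC.
rewrite e4 in e3.
have Y0 := N1_ge0 (w0^T - r^T).
have hY : N1 (w0^T - r^T) <= nn * (eps / (2 * K)).
  apply: le_trans e3 _; apply: ler_wpM2l => //; exact: ltW.
have hfin := final_ineq CA0 CB0 (N1_ge0 X) Y0 nn0 eps0 hz ht hY.
apply: le_lt_trans hfin.
apply: ler_wpM2l => //.
apply: le_trans e1 _; apply: lerD => //.
apply: ler_wpM2l => //.
Qed.

Lemma sum_seq_ge (R : realType) (T : eqType) (s : seq T) (h : T -> R) :
  (forall x, x \in s -> 0 <= h x) ->
  (0 <= \sum_(y <- s) h y) /\ forall x, x \in s -> h x <= \sum_(y <- s) h y.
Proof.
elim: s => [|a s IH] hs; first by rewrite big_nil.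
have [IH1 IH2] : _ := IH (fun x xs => hs x (ltac:(by rewrite in_cons xs orbT))).
have ha : 0 <= h a by apply: hs; rewrite mem_head.
rewrite big_cons; split; first by apply: addr_ge0.
move=> x; rewrite in_cons => /orP [/eqP -> | xs].
  by rewrite lerDl.
by apply: le_trans (IH2 x xs) _; rewrite lerDr.
Qed.

Lemma norm2_0 (R : realType) n : norm2 (0 : 'cV[R]_n) = 0.
Proof. by rewrite /norm2 big1 ?sqrtr0 // => i _; rewrite mxE expr0n. Qed.

Lemma hard (R : realType) n k (A : 'I_k -> 'M[R]_n) (g : 'I_k -> 'cV[R]_n) :
  (0 < n)%N -> (forall i, A i \in unitmx) ->
  (forall w : 'cV[R]_n, w != 0 -> exists i, ~ rat_dependent (invmx (A i) *m w)) ->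
  dense_forest (fun x => exists i, shifted_lattice (A i) (g i) x).
Proof.
move=> n0 hA hgood eps eps0.
have Lt : forall w0 : 'rV[R]_n, exists p : R * R, w0 != 0 ->
    0 <= p.1 /\ 0 < p.2 /\ forall r : 'rV[R]_n, `|r - w0| < p.2 ->
    forall c : 'cV[R]_n, exists s, `|s| <= p.1 /\
      exists i z, N1 (c + s *: r^T - (A i *m zR z + g i)) < eps.
  move=> w0; have [w00|wn] := eqVneq w0 0.
    by exists (0, 0).
  have [T [rho H]] := loc g hA hgood eps0 wn.
  by exists (T, rho).
have [F hF] := choice Lt.
pose S := [set r : 'rV[R]_n | `|r| = 1]%classic.
have cS := @sphere_compact R n; rewrite compact_cover in cS.
have Sn0 : forall r, S r -> r != 0.
  by move=> r Sr; apply/negP => /eqP r0; move: Sr; rewrite /S /= r0 normr0 => /eqP; rewrite eq_sym oner_eq0.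
have cov : (S `<=` cover S (fun w0 => ball w0 (F w0).2))%classic.
  move=> r Sr; exists r => //; apply: ballxx.
  by have [_ [h _]] := hF r (Sn0 r Sr).
have [D' subD fincov] := cS _ S (fun w0 => ball w0 (F w0).2) (fun i _ => ball_open _ _) cov.
have subS : forall w0, w0 \in D' -> S w0.
  by move=> w0 /subD; rewrite in_setE.
have Dpos : forall w0, w0 \in D' -> 0 <= (F w0).1.
  by move=> w0 wD; have [h _] := hF w0 (Sn0 _ (subS _ wD)).
have [Tm0 TmGe] := sum_seq_ge Dpos.
set Tm := \sum_(w0 <- D') (F w0).1 in Tm0 TmGe.
have nR0 : (0 : R) < n%:R by rewrite ltr0n.
exists (2 * n%:R * (Tm + 1)); split; first by rewrite !mulr_gt0 //; lra.
move=> a b hab.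
set d := b - a in hab *.
have dn0 : d != 0.
  apply/negP => /eqP d0; move: hab; rewrite d0 norm2_0 => h.
  have : (0 : R) < 2 * n%:R * (Tm + 1) by rewrite !mulr_gt0 //; lra.
  by rewrite -h ltxx.
have dTn0 : d^T != 0 by apply: contraNneq dn0 => h; rewrite -(trmxK d) h trmx0.
set L := `|d^T|.
have L0 : 0 < L by rewrite normr_gt0.
have hVL : 2 * n%:R * (Tm + 1) <= n%:R * L.
  by rewrite -hab; apply: le_trans (norm2_le_N1 d) (N1_le_mx_norm d).
have hL : 2 * (Tm + 1) <= L.
  by rewrite -(ler_pM2l nR0) mulrA [n%:R * 2]mulrC.
set r := L^-1 *: d^T.
have Sr : S r by rewrite /S /= normrZV // unitfE gt_eqF.
have [w0 /= w0D bw] := fincov r Sr.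
have [T0 [rho0 H]] := hF w0 (Sn0 _ (subS _ w0D)).
have hr : `|r - w0| < (F w0).2.
  by move: bw; rewrite -ball_normE /ball_ /= distrC.
have [s [hs [i [z hz]]]] := H r hr (a + 2^-1 *: d).
have sT : `|s| <= Tm := le_trans hs (TmGe _ w0D).
exists (2^-1 + s / L); split.
  have hsL : `|s / L| <= 2^-1.
    have Li : 0 < L^-1 by rewrite invr_gt0.
    rewrite normrM (gtr0_norm Li) ler_pdivrMr //; lra.
  move: hsL; rewrite ler_norml => /andP [h1 h2]; apply/andP; split; lra.
exists (A i *m zR z + g i); split; first by exists i, z.
apply: le_lt_trans (norm2_le_N1 _) _.
have -> : a + (2^-1 + s / L) *: d - (A i *m zR z + g i) =
    a + 2^-1 *: d + s *: r^T - (A i *m zR z + g i).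
  apply/matrixP => x y; rewrite !mxE; field; by move: L0; rewrite lt0r => /andP [].
exact: hz.
Qed.

Lemma ratdep_of_rat (R : realType) n (u : 'cV[R]_n) (p : 'cV[rat]_n) :
  p != 0 -> \sum_l ratr (p l 0) * u l 0 = 0 -> rat_dependent u.
Proof.
move=> pn hp.
pose lam (l : 'I_n) := \prod_(l' | l' != l) denq (p l' 0).
pose Lam := \prod_l' denq (p l' 0).
have hq : forall l, ((numq (p l 0) * lam l)%:~R : R) = ratr (p l 0) * Lam%:~R.
  move=> l.
  have e1 : ((numq (p l 0))%:~R : R) = ratr (p l 0) * (denq (p l 0))%:~R.
    by rewrite -[LHS](ratr_int R) numqE rmorphM /= ratr_int.
  by rewrite intrM e1 -mulrA -intrM /Lam (bigD1 l).
exists (\col_l (numq (p l 0) * lam l)); split.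
  have [l pl] := nz_entry pn.
  apply/negP => /eqP q0.
  have : (\col_l (numq (p l 0) * lam l)) l 0 = 0 by rewrite q0 mxE.
  rewrite mxE; apply/eqP; rewrite mulf_eq0 negb_or numq_eq0 pl /=.
  by rewrite prodf_seq_neq0; apply/allP => l' _; apply/implyP => _; rewrite denq_neq0.
have -> : \sum_i ((\col_l (numq (p l 0) * lam l)) i 0)%:~R * u i 0 =
    Lam%:~R * \sum_l ratr (p l 0) * u l 0.
  rewrite mulr_sumr; apply: eq_bigr => l _; rewrite mxE hq; ring.
by rewrite hp mulr0.
Qed.

Lemma ratdep_transfer (R : realType) n (u : 'cV[R]_n) (Q : 'M[rat]_n) (c : R) :
  Q \in unitmx -> rat_dependent u ->
  rat_dependent (c *: (map_mx (fun q : rat => ratr q) Q *m u)).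
Proof.
move=> hQ [q [qn hq]].
pose qQ : 'cV[rat]_n := map_mx (fun m : int => m%:~R) q.
pose rrow := qQ^T *m invmx Q.
apply: (@ratdep_of_rat _ _ _ rrow^T).
  apply/negP => /eqP r0.
  have : rrow *m Q = qQ^T by rewrite /rrow -mulmxA mulVmx // mulmx1.
  rewrite -(trmxK rrow) r0 trmx0 mul0mx => /esym /eqP; rewrite trmx_eq0 => /eqP h.
  move: qn; apply/negP/negPn/eqP; apply/matrixP => i j.
  move/matrixP: h => /(_ i j); rewrite !mxE => /eqP; rewrite intr_eq0 => /eqP ->.
  by [].
have hrQ : rrow *m Q = qQ^T by rewrite /rrow -mulmxA mulVmx // mulmx1.
have e : map_mx (fun q : rat => ratr q) rrow *m (map_mx (fun q : rat => ratr q) Q *m u)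
    = map_mx (fun q : rat => (ratr q : R)) qQ^T *m u.
  by rewrite mulmxA -map_mxM hrQ.
move/matrixP: e => /(_ 0 0); rewrite !mxE => e2.
have -> : \sum_l ratr (rrow^T l 0) * (c *: (map_mx (fun q : rat => ratr q) Q *m u)) l 0
  = c * \sum_j (map_mx (fun q : rat => (ratr q : R)) rrow) 0 j *
         (map_mx (fun q : rat => ratr q) Q *m u) j 0.
  rewrite mulr_sumr; apply: eq_bigr => l _; rewrite !mxE; ring.
rewrite e2; transitivity (c * \sum_(i < n) (q i 0)%:~R * u i 0); last by rewrite hq mulr0.
congr (_ * _); apply: eq_bigr => l _.
by rewrite !mxE ratr_int.
Qed.

Lemma class_good (R : realType) n k (M M' : 'I_k -> 'M[R]_n) :
  (forall i, M' i \in unitmx) -> same_class M M' ->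
  (~ exists v : 'I_k -> 'cV[R]_n,
       (forall i, v i != 0) /\ (forall i, rat_dependent (v i)) /\
       (forall i j, M i *m v i = M j *m v j)) ->
  forall w : 'cV[R]_n, w != 0 -> exists i, ~ rat_dependent (invmx (M' i) *m w).
Proof.
move=> hM' hc H1 w wn; apply: contrapT => Hall.
have Hr : forall i, rat_dependent (invmx (M' i) *m w).
  by move=> i; apply: contrapT => h; apply: Hall; exists i.
have hc' : forall i, exists p : R * 'M[rat]_n, p.1 != 0 /\ p.2 \in unitmx /\
    M' i = p.1 *: (M i *m map_mx (fun q : rat => ratr q) p.2).
  by move=> i; have [c [cn [Q [hQ e]]]] := hc i; exists (c, Q).
have [cQ hcQ] := choice hc'.
pose v i := (cQ i).1 *: (map_mx (fun q : rat => ratr q) (cQ i).2 *m (invmx (M' i) *m w)).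
have Mv : forall i, M i *m v i = w.
  move=> i; have [_ [_ e]] := hcQ i.
  transitivity (M' i *m (invmx (M' i) *m w)); last by rewrite mulmxA mulmxV // mul1mx.
  by rewrite /v -scalemxAr mulmxA scalemxAl {2}e -!scalemxAl !mulmxA.
apply: H1; exists v; split; last split.
- move=> i; apply/negP => /eqP v0; move: wn; by rewrite -(Mv i) v0 mulmx0 eqxx.
- move=> i; have [_ [hQ _]] := hcQ i; exact: ratdep_transfer.
- by move=> i j; rewrite !Mv.
Qed.

Lemma norm2Z (R : realType) n (c : R) (x : 'cV[R]_n) : norm2 (c *: x) = `|c| * norm2 x.
Proof.
rewrite /norm2 -sqrtr_sqr -sqrtrM ?sqr_ge0 //; congr Num.sqrt.
rewrite mulr_sumr; apply: eq_bigr => i _; rewrite mxE; ring.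
Qed.

Lemma norm2_gt0 (R : realType) n (x : 'cV[R]_n) : x != 0 -> 0 < norm2 x.
Proof.
move=> /nz_entry [j hj]; rewrite /norm2 sqrtr_gt0.
apply: lt_le_trans (_ : 0 < x j 0 ^+ 2) _; first by rewrite lt_def sqr_ge0 andbT sqrf_eq0.
by rewrite (bigD1 j) //= lerDl; apply: sumr_ge0 => i _; apply: sqr_ge0.
Qed.

Lemma N1_le_n_norm2 (R : realType) n (x : 'cV[R]_n) : N1 x <= n%:R * norm2 x.
Proof.
rewrite /N1; apply: le_trans (_ : \sum_(i < n) norm2 x <= _).
  apply: ler_sum => i _; rewrite /norm2 -sqrtr_sqr; apply: ler_wsqrtr.
  by rewrite (bigD1 i) //= lerDl; apply: sumr_ge0 => j _; apply: sqr_ge0.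
by rewrite sumr_const card_ord mulr_natl.
Qed.

Lemma dot_abs (R : realType) n (a y : 'cV[R]_n) : `|dot a y| <= N1 a * N1 y.
Proof.
rewrite /dot; apply: le_trans (ler_norm_sum _ _ _) _.
rewrite /N1 mulr_suml; apply: ler_sum => i _; rewrite normrM.
apply: ler_wpM2l => //; exact: N1_entry.
Qed.

Lemma half_far (R : realType) (m : int) : 2^-1 <= `|2^-1 - (m%:~R : R)|.
Proof.
have [hz0|hz0] := lerP m 0.
  have : (m%:~R : R) <= 0%:~R by rewrite ler_int.
  move=> h; rewrite ger0_norm; lra.
have : (1%:~R : R) <= m%:~R by rewrite ler_int.
move=> h; rewrite ler0_norm; lra.
Qed.

Lemma intr_sum (R : realType) n (F : 'I_n -> int) :
  ((\sum_i F i)%:~R : R) = \sum_i (F i)%:~R.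
Proof.
by apply: (big_ind2 (fun (a : int) (b : R) => a%:~R = b)) => // x1 x2 y1 y2 <- <-; rewrite intrD.
Qed.

Lemma easy (R : realType) n k (M : 'I_k -> 'M[R]_n) :
  (0 < k)%N -> (0 < n)%N -> (forall i, M i \in unitmx) ->
  (exists v : 'I_k -> 'cV[R]_n,
       (forall i, v i != 0) /\ (forall i, rat_dependent (v i)) /\
       (forall i j, M i *m v i = M j *m v j)) ->
  exists g : 'I_k -> 'cV[R]_n,
    ~ dense_forest (fun x => exists i : 'I_k, shifted_lattice (M i) (g i) x).
Proof.
move=> hk hn hM [v [vn [vr veq]]].
pose i0 : 'I_k := Ordinal hk.
pose w := M i0 *m v i0.
have Mv : forall i, M i *m v i = w by move=> i; rewrite /w (veq i i0).
have vi : forall i, invmx (M i) *m w = v i.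
  by move=> i; rewrite -(Mv i) mulmxA mulVmx // mul1mx.
have wn : w != 0.
  apply/negP => /eqP w0; have := vn i0; by rewrite -(vi i0) w0 mulmx0 eqxx.
have [q hq] := choice vr.
have hl : forall i, exists l, q i l 0 != 0 := fun i => nz_entry (proj1 (hq i)).
have [l hl'] := choice hl.
pose u i : 'cV[R]_n := (2 * (q i (l i) 0)%:~R)^-1 *: delta_mx (l i) 0.
pose g i := - (M i *m u i).
exists g => Hd.
pose Ki i := N1 (zR (q i) : 'cV[R]_n) * CM (invmx (M i)).
have Ki0 : forall i, 0 <= Ki i.
  by move=> i; apply: mulr_ge0; [exact: N1_ge0 | exact: CM_ge0].
pose K := \sum_i Ki i.
have KiK : forall i, Ki i <= K.
  by move=> i; rewrite /K (bigD1 i) //= lerDl; apply: sumr_ge0 => j _.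
have K0 : 0 <= K by apply: sumr_ge0 => j _.
have nR0 : (0 : R) < n%:R by rewrite ltr0n.
pose eps := (2 * n%:R * (K + 1))^-1.
have eps0 : 0 < eps by rewrite invr_gt0 !mulr_gt0 //; lra.
have [V [V0 HV]] := Hd eps eps0.
have nw0 := norm2_gt0 wn.
pose b := (V / norm2 w) *: w.
have hb : norm2 (b - 0) = V.
  rewrite subr0 norm2Z ger0_norm; last by apply: divr_ge0; apply: ltW.
  by rewrite divfK // gt_eqF.
have [t [ht [f [[i [z ->]] hf]]]] := HV 0 b hb.
set s := t * (V / norm2 w).
set y := s *: v i - zR z + u i.
have ex : 0 + t *: (b - 0) - (M i *m map_mx (fun m : int => m%:~R) z + g i) = M i *m y.
  rewrite /y mulmxDr mulmxBr -scalemxAr Mv /g /b /s -/(zR z).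
  by apply/matrixP => a c; rewrite !mxE; ring.
rewrite ex in hf.
have hy : N1 y <= CM (invmx (M i)) * N1 (M i *m y).
  have := N1_mul (invmx (M i)) (M i *m y); by rewrite mulmxA mulVmx // mul1mx.
have hd : dot (zR (q i)) y = 2^-1 - (\sum_j q i j 0 * z j 0)%:~R.
  rewrite /y dotD dotB dotZ.
  have -> : dot (zR (q i)) (v i) = 0.
    by have [_ h] := hq i; rewrite -h; apply: eq_bigr => j _; rewrite mxE.
  have -> : dot (zR (q i) : 'cV[R]_n) (zR z) = (\sum_j q i j 0 * z j 0)%:~R.
    apply: (etrans _ (esym (intr_sum R (fun j => q i j 0 * z j 0)))); rewrite /dot.
    by apply: eq_bigr => j _; rewrite !mxE intrM.
  have -> : dot (zR (q i)) (u i) = 2^-1.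
    rewrite /u dotZ dotC dot_delta mxE invfM -mulrA mulVf ?mulr1 //.
    by rewrite intr_eq0; exact: hl'.
  ring.
have h1 := half_far R (\sum_j q i j 0 * z j 0).
rewrite -hd in h1.
have h2 := dot_abs (zR (q i)) y.
have h3 := N1_le_n_norm2 (M i *m y).
have hK := KiK i.
rewrite /Ki in hK.
set A1 := N1 (zR (q i)) in h2 hK.
set B1 := CM (invmx (M i)) in hy hK.
set Y := N1 y in hy h2.
set X := N1 (M i *m y) in hy h3.
set Z := norm2 (M i *m y) in h3 hf.
have A10 : 0 <= A1 := N1_ge0 _.
have B10 : 0 <= B1 := CM_ge0 _.
have Y0 : 0 <= Y := N1_ge0 _.
have e1 : A1 * Y <= A1 * (B1 * X) by apply: ler_wpM2l.
have e2 : A1 * (B1 * X) <= K * (n%:R * eps).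
  rewrite mulrA; apply: ler_pM; [by apply: mulr_ge0|by apply: N1_ge0|done|].
  apply: le_trans h3 _; apply: ler_wpM2l; [lra | exact: ltW].
have e3 : K * (n%:R * eps) < 2^-1.
  have -> : n%:R * eps = (2 * (K + 1))^-1.
    rewrite /eps; field; rewrite ?gt_eqF //; lra.
  rewrite ltr_pdivrMr; last by lra.
  have -> : 2^-1 * (2 * (K + 1)) = K + 1 :> R by field.
  lra.
lra.
Qed.

Theorem theorem1p1 (R : realType) (n k : nat) (hn : (2 <= n)%N) (hk : (2 <= k)%N)
  (M : 'I_k -> 'M[R]_n) (hM : forall i, M i \in unitmx) :
  (~ exists v : 'I_k -> 'cV[R]_n,
       (forall i, v i != 0) /\ (forall i, rat_dependent (v i)) /\
       (forall i j, M i *m v i = M j *m v j))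
  <->
  (forall (g : 'I_k -> 'cV[R]_n) (M' : 'I_k -> 'M[R]_n),
     (forall i, M' i \in unitmx) -> same_class M M' ->
     dense_forest (fun x => exists i : 'I_k, shifted_lattice (M' i) (g i) x)).
Proof.
have n0 : (0 < n)%N by apply: leq_trans hn.
have k0 : (0 < k)%N by apply: leq_trans hk.
split.
  move=> H1 g M' hM' hc.
  exact: (hard g n0 hM' (class_good hM' hc H1)).
move=> H2 Hex.
have [g hg] := easy k0 n0 hM Hex.
apply: hg; apply: H2 => // i.
exists 1; split; first exact: oner_neq0.
exists 1%:M; split; first exact: unitmx1.
have -> : map_mx (fun q : rat => (ratr q : R)) (1%:M : 'M[rat]_n) = 1%:M.
  by apply/matrixP => a b; rewrite !mxE rmorphMn rmorph1.
by rewrite mulmx1 scale1r.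
Qed.
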